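(* Let $G$ be an undirected graph and $n\ge 4$ an even integer. Then $G$ admits a homomorphism to the undirected cycle $C_{n-1}$ if and only if $G$ admits an acyclic orientation containing no induced subgraph isomorphic to a member of $F_n\setminus\{\overrightarrow{C}_3,\overrightarrow{C}_4\}$.
   Context: Graph homomorphisms are vertex maps sending edges to edges (for digraphs: arcs to arcs). An orientation of an undirected graph assigns exactly one direction to each edge; it is acyclic if it has no directed cycle. $\overrightarrow{C}_k$ is the directed cycle on $k$ vertices. For $n\ge 3$, $Q_n$ is the oriented path $(q_0,\dots,q_{n-1})$ on $n$ distinct vertices, with exactly one arc between $q_i$ and $q_{i+1}$ for each $i$ and no other arcs, such that: the first two arcs are $q_0\to q_1$ and $q_1\to q_2$; the subpath $(q_1,\dots,q_{n-2})$ is alternating (consecutive arcs have opposite directions); and the last two arcs have the same direction. For even $n\ge 4$, $F_n$ is the set (up to isomorphism) of oriented graphs $H$ for which there is a homomorphism $Q_n\to H$ that is surjective on vertices. *)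

(* Defs.v *)
(* Finite simple graphs as symmetric irreflexive relations. *)
From mathcomp Require Import all_boot.
Set Implicit Arguments. Unset Strict Implicit. Unset Printing Implicit Defensive.

Definition hom (T W : finType) (e : rel T) (b : rel W) : Prop :=
  exists f : T -> W, forall x y, e x y -> b (f x) (f y).

Definition Cyc (m : nat) : rel 'I_m :=
  fun i j => (val j == (val i).+1 %% m) || (val i == (val j).+1 %% m).

Definition DCyc (k : nat) : rel 'I_k :=
  fun i j => val j == (val i).+1 %% k.

Definition orientation (T : finType) (e o : rel T) : Prop :=
  (forall x y, o x y -> e x y) /\ (forall x y, e x y -> o x y = ~~ o y x).

Definition acyclic (T : finType) (o : rel T) : Prop :=
  forall x y, o x y -> ~~ connect o y x.

Definition oriented (V : finType) (a : rel V) : Prop :=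
  (forall u, ~~ a u u) /\ (forall u v, a u v -> ~~ a v u).

(* direction of the arc between q_i and q_{i+1} in Q_n (true = q_i -> q_{i+1}):
   arcs 0 and 1 forward, arcs 1..n-3 alternate, arc n-2 same as arc n-3. *)
Definition qfwd0 (i : nat) : bool := (i == 0) || odd i.
Definition qfwd (n i : nat) : bool :=
  if i == n - 2 then qfwd0 (n - 3) else qfwd0 i.

Definition Qarc (n : nat) : rel 'I_n :=
  fun i j => ((val j == (val i).+1) && qfwd n i)
          || ((val i == (val j).+1) && ~~ qfwd n j).

Arguments Qarc n : clear implicits.
Definition inF (n : nat) (V : finType) (a : rel V) : Prop :=
  oriented a /\
  exists f : 'I_n -> V,
    (forall i j, Qarc n i j -> a (f i) (f j)) /\ (forall v, exists i, f i = v).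

Arguments inF n [V] a.
Definition diso (V W : finType) (a : rel V) (b : rel W) : Prop :=
  exists phi : V -> W, bijective phi /\ forall u v, a u v = b (phi u) (phi v).

Definition induced_copy (V T : finType) (a : rel V) (o : rel T) : Prop :=
  exists phi : V -> T, injective phi /\ forall u v, a u v = o (phi u) (phi v).
Arguments Cyc m : clear implicits.
Arguments DCyc k : clear implicits.

(* Main.v *)
Require Import Defs.
From mathcomp Require Import all_boot zify.
Set Implicit Arguments. Unset Strict Implicit. Unset Printing Implicit Defensive.

Definition Dn (m a b : nat) : bool :=
  ((a == 0) && ((b == 1) || (b == m - 1))) || ((a == 1) && (b == 2))
  || ((a %% 2 == 1) && (3 <= a) && ((b == a - 1) || (b == a + 1))).

Definition pot (a : nat) : nat :=
  if a == 1 then 1 else if (a == 0) || (a %% 2 == 1) then 0 else 2.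

Lemma Dn_pot m a b : m %% 2 == 1 -> 3 <= m -> Dn m a b -> pot a < pot b.
Proof.
move=> mo m3; rewrite /Dn /pot => H.
repeat (case: ifP => ?); lia.
Qed.

Lemma modS_eq m k : k < m -> (k.+1 %% m == if k.+1 == m then 0 else k.+1).
Proof.
move=> hk; case: ifP => /eqP h; first by rewrite h modnn.
by rewrite modn_small //; lia.
Qed.

Lemma Dn_step m i : m %% 2 == 1 -> 3 <= m -> i.+1 < m ->
  Dn m i i.+1 = ~~ Dn m i.+1 i.
Proof.
move=> mo m3 h; rewrite /Dn.
have [->|i0] := eqVneq i 0; first by rewrite /=; lia.
have [->|i1] := eqVneq i 1; first by rewrite /=; lia.
case: (boolP (i %% 2 == 1)) => io.
  apply/idP/idP; lia.
apply/idP/idP; lia.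
Qed.

Lemma Dn_wrap m : m %% 2 == 1 -> 3 <= m ->
  Dn m m.-1 0 = ~~ Dn m 0 m.-1.
Proof. move=> mo m3; rewrite /Dn; apply/idP/idP; lia. Qed.

Lemma Dn_adj m a b : m %% 2 == 1 -> 3 <= m -> a < m -> b = (if a.+1 == m then 0 else a.+1) ->
  Dn m a b = ~~ Dn m b a.
Proof.
move=> mo m3 ha; case: ifP => /eqP h ->.
  have -> : a = m.-1 by lia.
  by rewrite Dn_wrap // negbK.
by apply: Dn_step => //; lia.
Qed.

Lemma Cyc_Dn m (i j : 'I_m) : m %% 2 == 1 -> 3 <= m ->
  Cyc m i j -> Dn m i j = ~~ Dn m j i.
Proof.
move=> mo m3; case: i j => [i hi] [j hj]; rewrite /Cyc /= => /orP [] /eqP H.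
  by apply: Dn_adj => //; rewrite H; apply/eqP; apply: modS_eq.
rewrite (@Dn_adj m j i) ?negbK //; rewrite H; apply/eqP; apply: modS_eq => //.
Qed.

Lemma oddE i : odd i = (i %% 2 == 1).
Proof. by rewrite modn2; case: (odd i). Qed.

Lemma qfwdE n i : 1 <= i -> i < n - 2 -> qfwd n i = (i %% 2 == 1).
Proof.
move=> h1 h2; rewrite /qfwd /qfwd0.
have -> : (i == n - 2) = false by apply/eqP; lia.
by rewrite oddE; case: (i =P 0) => //; lia.
Qed.

Lemma qfwd0n n : 4 <= n -> qfwd n 0.
Proof. move=> h; rewrite /qfwd; case: ifP => [/eqP|]; first lia. by []. Qed.

Lemma qfwd_end n i : 4 <= n -> ~~ odd n -> i = n - 3 \/ i = n - 2 -> qfwd n i.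
Proof.
move=> h4 ho hi; rewrite /qfwd /qfwd0.
have o3 : odd (n - 3) by rewrite oddE; move: ho; rewrite oddE; lia.
case: hi => ->; last by rewrite eqxx o3 orbT.
have -> : (n - 3 == n - 2) = false by apply/eqP; lia.
by rewrite o3 orbT.
Qed.

Lemma no2walk m a b c : m %% 2 == 1 -> 3 <= m -> Dn m a b -> Dn m b c ->
  [/\ a = 0, b = 1 & c = 2].
Proof. rewrite /Dn => mo m3 H1 H2; split; lia. Qed.

Lemma noQ_nat n (h : nat -> nat) : 4 <= n -> ~~ odd n ->
  (forall i, i.+1 < n -> if qfwd n i then Dn (n - 1) (h i) (h i.+1)
                         else Dn (n - 1) (h i.+1) (h i)) -> False.
Proof.
move=> n4 no H.
have mo : (n - 1) %% 2 == 1 by move: no; rewrite oddE; lia.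
have m3 : 3 <= n - 1 by lia.
have H0 := H 0 ltac:(lia); rewrite qfwd0n // in H0.
have H1 := H 1 ltac:(lia); rewrite qfwdE ?modn_small //= in H1; try lia.
have [_ h1 h2] := no2walk mo m3 H0 H1.
have Ha := H (n - 3) ltac:(lia); rewrite qfwd_end // in Ha; last by left.
have Hb := H (n - 2) ltac:(lia); rewrite qfwd_end // in Hb; last by right.
have ea : (n - 3).+1 = n - 2 by lia.
have eb : (n - 2).+1 = n - 1 by lia.
rewrite ea in Ha; rewrite eb in Hb.
have [e0 e1 _] := no2walk mo m3 Ha Hb.
have [n4'|n6] : n = 4 \/ 6 <= n by move: no; rewrite oddE; lia.
  have E : n - 2 = 2 by lia.
  by rewrite E in e1; lia.
have inv : forall d, 2 + d <= n - 3 -> 1 <= h (2 + d) <= 2 + d /\ h (2 + d) %% 2 = (2 + d) %% 2.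
  elim=> [|d IH] hd; first by rewrite h2.
  have [IH1 IH2] := IH ltac:(lia).
  have Hd := H (2 + d) ltac:(lia).
  rewrite qfwdE in Hd; try lia.
  rewrite addnS.
  case: ifP Hd => hp; rewrite /Dn => Hd; split; lia.
have [] := inv (n - 5) ltac:(lia).
have -> : 2 + (n - 5) = n - 3 by lia.
lia.
Qed.
Ltac ifs := repeat match goal with |- context [if ?a == ?b then _ else _] =>
  case: (a =P b) => ?; try (exfalso; lia) end.

Definition pathQ (T : finType) (o : rel T) (g : nat -> T) (L : nat) :=
  forall i, i < L -> if qfwd0 i then o (g i) (g i.+1) else o (g i.+1) (g i).

Lemma QarcP (T : finType) (o : rel T) n (G : nat -> T) :
  (forall i, i.+1 < n -> if qfwd n i then o (G i) (G i.+1) else o (G i.+1) (G i)) ->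
  forall i j : 'I_n, Qarc n i j -> o (G i) (G j).
Proof.
move=> H [i hi] [j hj]; rewrite /Qarc /= => /orP [/andP [/eqP E q] | /andP [/eqP E q]];
  subst.
  by move: (H i hj); rewrite q.
by move: (H j hi); rewrite (negbTE q).
Qed.

Definition hasQ (T : finType) (o : rel T) n :=
  exists G : 'I_n -> T, forall i j, Qarc n i j -> o (G i) (G j).

Lemma final (T : finType) (o : rel T) n g u v z : 4 <= n -> ~~ odd n ->
  pathQ o g (n - 3) -> g (n - 3) = u -> o u v -> o v z -> hasQ o n.
Proof.
move=> n4 no P gu uv vz.
pose Gn i := if i == n - 2 then v else if i == n - 1 then z else g i.
exists (fun i : 'I_n => Gn i); apply: QarcP => i hi.
have o3 : odd (n - 3) by rewrite oddE; move: no; rewrite oddE; lia.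
rewrite /Gn /qfwd.
have [e2|e2] := eqVneq i (n - 2).
  rewrite e2 ?eqxx /qfwd0 o3 orbT.
  have -> : ((n - 2).+1 == n - 2) = false by apply/eqP; lia.
  by have -> : (n - 2).+1 == n - 1 by apply/eqP; lia.
have -> : (i == n - 1) = false by apply/eqP; lia.
have [e3|e3] := eqVneq i (n - 3).
  rewrite e3 /qfwd0 o3 orbT.
  have -> : (n - 3).+1 == n - 2 by apply/eqP; lia.
  by rewrite gu.
have -> : (i.+1 == n - 2) = false by apply/eqP; lia.
have -> : (i.+1 == n - 1) = false by apply/eqP; lia.
by apply: P; lia.
Qed.

Lemma pad1 (T : finType) (o : rel T) g L : odd L -> 3 <= L -> pathQ o g L ->
  exists g', pathQ o g' (L + 2) /\ g' (L + 2) = g L.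
Proof.
move=> Lo L3 P.
pose g' i := if i == L.+1 then g L.-1 else if i == L + 2 then g L else g i.
have hb : o (g L) (g L.-1).
  have := P L.-1 ltac:(lia); rewrite /qfwd0.
  have -> : L.-1.+1 = L by lia.
  have -> : (L.-1 == 0) = false by apply/eqP; lia.
  have -> : odd L.-1 = false by move: Lo; rewrite !oddE; lia.
  by [].
exists g'; split; last first.
  rewrite /g'; have -> : (L + 2 == L.+1) = false by apply/eqP; lia.
  by rewrite eqxx.
move=> i hi; rewrite /g'.
have [eL|eL] := eqVneq i L.
  by subst i; rewrite /qfwd0 Lo orbT; ifs.
have [eL1|eL1] := eqVneq i L.+1.
  subst i; rewrite /qfwd0.
  have -> : odd L.+1 = false by rewrite /= Lo.
  by ifs.
ifs; by apply: P; lia.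
Qed.

Lemma pad (T : finType) (o : rel T) g L d : odd L -> 3 <= L -> pathQ o g L ->
  exists g', pathQ o g' (L + 2 * d) /\ g' (L + 2 * d) = g L.
Proof.
move=> Lo L3 P; elim: d => [|d [g' [P' E']]]; first by exists g; rewrite addn0.
have [|||g'' [P'' E'']] := @pad1 T o g' (L + 2 * d).
- by move: Lo; rewrite !oddE; lia.
- lia.
- done.
exists g''; rewrite -E' -E''; split.
  by have -> : L + 2 * d.+1 = L + 2 * d + 2 by lia.
by have -> : L + 2 * d.+1 = L + 2 * d + 2 by lia.
Qed.

Fixpoint W (T : finType) (o : rel T) (k : nat) (x : T) : bool :=
  match k with
  | 0 => [exists y, exists z, o z y && o y x]
  | k'.+1 => if odd k then [exists y, W o k' y && o x y]
             else [exists y, W o k' y && o y x]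
  end.

Lemma W_path (T : finType) (o : rel T) k x : W o k x ->
  exists g, pathQ o g k.+2 /\ g k.+2 = x.
Proof.
elim: k x => [|k IH] x /=.
  move=> /existsP [y /existsP [z /andP [zy yx]]].
  exists (fun i => if i == 0 then z else if i == 1 then y else x); split => //.
  by case=> [|[|[|i]]] //= _.
case: ifP => ko /existsP [y /andP [Wy r]]; have [g [P E]] := IH y Wy;
  exists (fun i => if i == k.+3 then x else g i); (split; last by rewrite eqxx).
  move=> i hi; have [ei|ei] := eqVneq i k.+2.
    subst i; rewrite eqxx /qfwd0 /=.
    have -> : (k.+2 == k.+3) = false by apply/eqP; lia.
    by rewrite /= in ko; rewrite ko E.
  have -> : (i == k.+3) = false by apply/eqP; lia.
  have -> : (i.+1 == k.+3) = false by apply/eqP; lia.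
  by apply: P; lia.
move=> i hi; have [ei|ei] := eqVneq i k.+2.
  subst i; rewrite eqxx /qfwd0 /=.
  have -> : (k.+2 == k.+3) = false by apply/eqP; lia.
  by rewrite /= in ko; rewrite ko E.
have -> : (i == k.+3) = false by apply/eqP; lia.
have -> : (i.+1 == k.+3) = false by apply/eqP; lia.
by apply: P; lia.
Qed.

Lemma tailW (T : finType) (o : rel T) n k u v z : 4 <= n -> ~~ odd n -> odd k ->
  k + 2 <= n - 3 -> W o k u -> o u v -> o v z -> hasQ o n.
Proof.
move=> n4 no ko kn Wu uv vz.
have [g [P E]] := W_path Wu.
have [|||g' [P' E']] := @pad T o g k.+2 ((n - 3 - k.+2) %/ 2).
- by rewrite /= ko.
- move: ko; rewrite oddE; lia.
- done.
have e : k.+2 + 2 * ((n - 3 - k.+2) %/ 2) = n - 3.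
  by move: no ko; rewrite !oddE; lia.
rewrite e in P' E'.
by apply: (final n4 no P' _ uv vz); rewrite E' E.
Qed.

Lemma walk3 (T : finType) (o : rel T) n x0 x1 x2 x3 : 4 <= n -> ~~ odd n ->
  o x0 x1 -> o x1 x2 -> o x2 x3 -> hasQ o n.
Proof.
move=> n4 no a b c.
have [n4'|n6] : n = 4 \/ 6 <= n by move: no; rewrite oddE; lia.
  subst n; apply: (@final T o 4 (fun i => if i == 0 then x0 else x1) x1 x2 x3) => //.
  by case=> [|i] //.
apply: (@tailW T o n 1 x1 x2 x3) => //; first lia.
apply/existsP; exists x2; rewrite b andbT.
by apply/existsP; exists x1; apply/existsP; exists x0; rewrite a b.
Qed.

Lemma modE m a : 0 < m -> a <= m -> a %% m = if a == m then 0 else a.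
Proof.
move=> m0 am; case: ifP => /eqP h; first by rewrite h modnn.
by rewrite modn_small //; lia.
Qed.

Lemma cyc_nat m a b (H : 0 < m) : 3 <= m -> 1 <= a <= m -> 1 <= b <= m ->
  (b == a + 1) || (a == b + 1) || ((a == m) && (b == 1)) || ((a == 1) && (b == m)) ->
  Cyc m (Ordinal (ltn_pmod a H)) (Ordinal (ltn_pmod b H)).
Proof.
move=> m3 ha hb hab; rewrite /Cyc /=.
rewrite (modE H (_ : a <= m)); last lia.
rewrite (modE H (_ : b <= m)); last lia.
have e1 : 1 %% m = 1 by rewrite modn_small //; lia.
case: (a =P m) => ea; case: (b =P m) => eb.
- lia.
- rewrite e1 (modE H (_ : b.+1 <= m)); last lia. ifs; lia.
- rewrite e1 (modE H (_ : a.+1 <= m)); last lia. ifs; lia.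
- rewrite (modE H (_ : a.+1 <= m)); last lia.
  rewrite (modE H (_ : b.+1 <= m)); last lia.
  ifs; lia.
Qed.

Lemma colorable (T : finType) (e o : rel T) n :
  orientation e o -> 4 <= n -> ~~ odd n -> ~ hasQ o n -> hom e (Cyc (n - 1)).
Proof.
move=> [oe eo] n4 no nQ.
have N3 : forall x0 x1 x2 x3, o x0 x1 -> o x1 x2 -> o x2 x3 -> False.
  by move=> x0 x1 x2 x3 a b c; apply: nQ; apply: (walk3 n4 no a b c).
have m0 : 0 < n - 1 by lia.
pose m := n - 1.
have mo : odd m by rewrite /m oddE; move: no; rewrite oddE; lia.
pose Pt u : pred nat := fun k => (odd k && W o k u) || (k == m - 2).
pose Ph u : pred nat := fun k => (~~ odd k && W o k u) || (k == m - 3).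
have exPt : forall u, exists k, Pt u k by move=> u; exists (m - 2); rewrite /Pt eqxx orbT.
have exPh : forall u, exists k, Ph u k by move=> u; exists (m - 3); rewrite /Ph eqxx orbT.
pose dt u := ex_minn (exPt u).
pose dh u := ex_minn (exPh u).
have dtP : forall u, Pt u (dt u) /\ forall k, Pt u k -> dt u <= k.
  by move=> u; rewrite /dt; case: ex_minnP.
have dhP : forall u, Ph u (dh u) /\ forall k, Ph u k -> dh u <= k.
  by move=> u; rewrite /dh; case: ex_minnP.
pose hasIn v := [exists y, o y v].
pose hasOut v := [exists y, o v y].
pose col v := if hasIn v && hasOut v then 1
              else if hasIn v then 2 + dh v else 2 + dt v.
have key : forall u v, o u v ->
  [/\ 1 <= col u <= m, 1 <= col v <= m &
   (col v == col u + 1) || (col u == col v + 1) || ((col u == m) && (col v == 1))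
   || ((col u == 1) && (col v == m))].
  move=> u v uv.
  have Hv : hasIn v by apply/existsP; exists u.
  have Ho : hasOut u by apply/existsP; exists v.
  have dtb : forall u, dt u <= m - 2 by move=> w; apply: (dtP w).2; rewrite /Pt eqxx orbT.
  have dhb : forall u, dh u <= m - 3 by move=> w; apply: (dhP w).2; rewrite /Ph eqxx orbT.
  have m3 : 3 <= m by rewrite /m; lia.
  case Hu: (hasIn u).
    have /existsP [w wu] := Hu.
    have Hvo : hasOut v = false.
      apply/negbTE/negP => /existsP [z vz]; exact: (N3 w u v z).
    have dh0 : dh v = 0.
      suff : dh v <= 0 by lia.
      apply: (dhP v).2; rewrite /Ph /= ; apply/orP; left.
      by apply/existsP; exists u; apply/existsP; exists w; rewrite wu uv.
    rewrite /col Hu Ho Hv Hvo dh0 /=; split; lia.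
  case Hvo: (hasOut v).
    have /existsP [z vz] := Hvo.
    have dtm : dt u = m - 2.
      have [P1 _] := dtP u; have := dtb u.
      move: P1; rewrite /Pt => /orP [/andP [od Wd]|/eqP //].
      case: (leqP (dt u + 2) (n - 3)) => hd.
        by case: nQ; apply: (tailW n4 no od hd Wd uv vz).
      move: od; rewrite oddE /m; lia.
    rewrite /col Hu Ho Hv Hvo dtm /=; split; lia.
  rewrite /col Hu Hv Hvo /=.
  have [Pa ma] := dtP u; have [Pb mb] := dhP v.
  have ha := dtb u; have hb := dhb v.
  have A1 : odd (dt u) && W o (dt u) u -> dh v <= (dt u).+1.
    move=> /andP [od Wd]; apply: mb; rewrite /Ph /=; rewrite od /=.
    by apply/orP; left; apply/existsP; exists u; rewrite Wd uv.
  have A2 : ~~ odd (dh v) && W o (dh v) v -> dt u <= (dh v).+1.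
    move=> /andP [od Wd]; apply: ma; rewrite /Pt /=; rewrite (negbTE od) /=.
    by apply/orP; left; apply/existsP; exists v; rewrite Wd uv.
  move: mo; rewrite /m oddE => mo.
  have ha' := ha; have hb' := hb; rewrite /m in ha' hb'.
  case/orP: Pa => [/andP [oa Wa] | /eqP ea];
  case/orP: Pb => [/andP [ob Wb] | /eqP eb].
  - have := A1 (introT andP (conj oa Wa)); have := A2 (introT andP (conj ob Wb)).
    move: oa ob; rewrite !oddE => oa ob; split; lia.
  - have := A1 (introT andP (conj oa Wa)).
    move: oa; rewrite !oddE => oa; rewrite /m in eb; split; lia.
  - have := A2 (introT andP (conj ob Wb)).
    move: ob; rewrite !oddE => ob; rewrite /m in ea; split; lia.
  - rewrite /m in ea eb; split; lia.
exists (fun v => Ordinal (ltn_pmod (col v) m0)) => x y exy.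
have := eo x y exy; case oxy: (o x y) => /= E.
  have [h1 h2 h3] := key x y oxy.
  by apply: cyc_nat => //; lia.
have [h1 h2 h3] := key y x (negbFE (esym E)).
rewrite /Cyc orbC.
by apply: cyc_nat => //; lia.
Qed.

Lemma noQ_ord n (h : 'I_n -> nat) : 4 <= n -> ~~ odd n ->
  (forall i j : 'I_n, Qarc n i j -> Dn (n - 1) (h i) (h j)) -> False.
Proof.
case: n h => [//|n'] h n4 no H.
apply: (@noQ_nat n'.+1 (fun i => h (inord i))) => // i hi.
case q: (qfwd n'.+1 i).
  apply: H; rewrite /Qarc /= !inordK //; last lia.
  by rewrite eqxx q.
apply: H; rewrite /Qarc /= !inordK //; last lia.
by rewrite eqxx q orbT.
Qed.

Lemma path_pot (T : finType) (o : rel T) (F : T -> nat) :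
  (forall x y, o x y -> F x < F y) ->
  forall p x, path o x p -> F x <= F (last x p).
Proof.
move=> H; elim=> [|y p IH] x //= /andP [xy py].
by apply: leq_trans (IH y py); apply: ltnW; apply: H.
Qed.

Lemma diso_arc (V : finType) (a : rel V) k (phi : V -> 'I_k) psi :
  cancel psi phi -> (forall u v, a u v = DCyc k (phi u) (phi v)) ->
  forall i j, DCyc k i j -> a (psi i) (psi j).
Proof. by move=> c H i j d; rewrite H !c. Qed.

Theorem mainTheorem12 (T : finType) (e : rel T) (n : nat) :
  symmetric e -> irreflexive e -> 4 <= n -> ~~ odd n ->
  (hom e (Cyc (n - 1)) <->
   exists o : rel T,
     [/\ orientation e o, acyclic o &
      forall (V : finType) (a : rel V),
        inF n a -> ~ diso a (DCyc 3) -> ~ diso a (DCyc 4) ->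
        ~ induced_copy a o]).
Proof.
move=> es ei n4 no.
have mo : (n - 1) %% 2 == 1 by move: no; rewrite oddE; lia.
have m3 : 3 <= n - 1 by lia.
split.
  move=> [f hf].
  exists (fun x y => e x y && Dn (n - 1) (f x) (f y)); split.
  - split; first by move=> x y /andP [].
    move=> x y exy; rewrite /= exy -(es x y) exy /=.
    exact: Cyc_Dn (hf x y exy).
  - move=> x y /andP [_ dxy]; apply/negP => /connectP [p pth lst].
    have := path_pot (F := fun z => pot (f z)) _ pth.
    rewrite -lst => /(_ _) H.
    have := Dn_pot mo m3 dxy.
    suff : pot (f y) <= pot (f x) by lia.
    apply: H => u v /andP [_ d]; exact: Dn_pot mo m3 d.
  - move=> V a [_ [fQ [hQ _]]] _ _ [phi [_ hphi]].
    apply: (@noQ_ord n (fun i => f (phi (fQ i)))) => // i j q.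
    by have := hQ i j q; rewrite hphi => /andP [].
move=> [o [[oe eo] ac noi]].
apply: (@colorable T e o n (conj oe eo)) => //.
move=> [G hG].
pose V := {x : T | x \in codom G}.
pose a : rel V := fun u v => o (val u) (val v).
apply: (noi V a).
- split.
    split.
      move=> u; apply/negP => h; have := oe _ _ h; by rewrite ei.
    move=> u v h; have := eo _ _ (oe _ _ h); rewrite /a in h *; rewrite h.
    by move=> <-.
  exists (fun i => exist (fun x => x \in codom G) (G i) (codom_f G i)); split.
    by move=> i j /hG.
  move=> [x hx]; have /codomP [i ei'] := hx; exists i; apply: val_inj => /=.
  by rewrite ei'.
- move=> [phi [[psi k1 k2] hphi]].
  have A : forall i j, DCyc 3 i j -> o (val (psi i)) (val (psi j)) := diso_arc k2 hphi.
  have h01 := A (@Ordinal 3 0 isT) (@Ordinal 3 1 isT) isT.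
  have h12 := A (@Ordinal 3 1 isT) (@Ordinal 3 2 isT) isT.
  have h20 := A (@Ordinal 3 2 isT) (@Ordinal 3 0 isT) isT.
  have := ac _ _ h01; rewrite (connect_trans (connect1 h12) (connect1 h20)).
  by [].
- move=> [phi [[psi k1 k2] hphi]].
  have A : forall i j, DCyc 4 i j -> o (val (psi i)) (val (psi j)) := diso_arc k2 hphi.
  have h01 := A (@Ordinal 4 0 isT) (@Ordinal 4 1 isT) isT.
  have h12 := A (@Ordinal 4 1 isT) (@Ordinal 4 2 isT) isT.
  have h23 := A (@Ordinal 4 2 isT) (@Ordinal 4 3 isT) isT.
  have h30 := A (@Ordinal 4 3 isT) (@Ordinal 4 0 isT) isT.
  have := ac _ _ h01.
  rewrite (connect_trans (connect1 h12) (connect_trans (connect1 h23) (connect1 h30))).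
  by [].
- exists val; split; [exact: val_inj | by []].
Qed.
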